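(* Let $n$ be a positive integer, $i,k\in\{1,\ldots,n\}$ with $k<n$, and let $H\sim\text{Hyp}(n,i,k)$. Then \[ \mathbb{E}(H\mid H\ge \mathbb{E}(H)) \,\le\, \lceil\mathbb{E}(H)\rceil + \sqrt{\text{Var}(H) \cdot \frac{n-1}{n-k} + 1}. \]
   Context: $\text{Hyp}(n,i,k)$ denotes the hypergeometric distribution: the number of black marbles in a sample without replacement of size $k$ from an urn with $i$ black and $n-i$ white marbles, i.e. $\mathbb{P}(H=j)=\binom{i}{j}\binom{n-i}{k-j}/\binom{n}{k}$. One has $\mathbb{E}(H)=ik/n$ and $\text{Var}(H)=k\cdot\frac{i}{n}\cdot\frac{n-i}{n}\cdot\frac{n-k}{n-1}$. For real $x$, $\lceil x\rceil=\min\{s\in\mathbb{Z}: s\ge x\}$. *)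

(* Defs.v *)
From mathcomp Require Import all_boot all_order all_algebra.
From mathcomp Require Import reals.
Set Implicit Arguments. Unset Strict Implicit. Unset Printing Implicit Defensive.
Import Order.TTheory GRing.Theory Num.Theory.
Local Open Scope ring_scope.

(* Hypergeometric distribution Hyp(n,i,k): P(H = j) = C(i,j) C(n-i,k-j) / C(n,k),
   supported on j = 0..k (values j outside 0..k have probability 0). *)
Definition hyp_pmf {R : realType} (n i k j : nat) : R :=
  ('C(i, j) * 'C(n - i, k - j))%:R / 'C(n, k)%:R.

Definition hyp_mean {R : realType} (n i k : nat) : R :=
  \sum_(j < k.+1) (j%:R * hyp_pmf n i k j).

Definition hyp_var {R : realType} (n i k : nat) : R :=
  \sum_(j < k.+1) ((j%:R - hyp_mean n i k) ^+ 2 * hyp_pmf n i k j).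

Definition hyp_cond_mean_upper {R : realType} (n i k : nat) : R :=
  (\sum_(j < k.+1 | hyp_mean (R := R) n i k <= j%:R) (j%:R * hyp_pmf n i k j)) /
  (\sum_(j < k.+1 | hyp_mean (R := R) n i k <= j%:R) hyp_pmf n i k j).

(* Main.v *)
Require Import Defs.
From mathcomp Require Import all_boot all_order all_algebra.
From mathcomp Require Import reals.
From mathcomp Require Import ring lra.
Import Order.TTheory GRing.Theory Num.Theory.
Local Open Scope ring_scope.

Section H.
Variable R : realType.
Variables n i k : nat.
Hypothesis hin : (i <= n)%N.

Definition gg (j : nat) : R := ('C(i, j) * 'C(n - i, k - j))%:R.
Definition aa (j : nat) : R := j%:R * (n%:R - i%:R - k%:R + j%:R) * gg j.

Lemma step j : (j < k)%N ->
  (i%:R - j%:R) * (k%:R - j%:R) * gg j = aa j.+1.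
Proof.
move=> hjk.
have F1 : (j.+1)%:R * ('C(i, j.+1))%:R = (i%:R - j%:R) * ('C(i, j))%:R :> R.
  rewrite -natrM mul_bin_left natrM.
  case: (leqP j i) => hji; first by rewrite natrB.
  by rewrite (bin_small hji) !mulr0.
have F2 : (k%:R - j%:R) * ('C(n - i, k - j))%:R =
   (n%:R - i%:R - k%:R + j.+1%:R) * ('C(n - i, k - j.+1))%:R :> R.
  have e : (k - j = (k - j.+1).+1)%N by rewrite subnS prednK // subn_gt0.
  rewrite -natrB; last exact: ltnW.
  rewrite e -natrM mul_bin_left natrM.
  case: (leqP (k - j.+1) (n - i)) => h.
    rewrite (natrB _ h) (natrB _ hin) (natrB _ hjk); congr (_ * _); rewrite -natr1; ring.
  by rewrite (bin_small h) !mulr0.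
rewrite /aa /gg !natrM.
have -> : (i%:R - j%:R) * (k%:R - j%:R) * ('C(i, j)%:R * 'C(n - i, k - j)%:R)
   = ((i%:R - j%:R) * 'C(i, j)%:R) * ((k%:R - j%:R) * 'C(n - i, k - j)%:R) :> R by ring.
rewrite -F1 F2; ring.
Qed.

Lemma shift c (phi : R -> R) : (c <= k)%N ->
  \sum_(c <= j < k.+1) (i%:R - j%:R) * (k%:R - j%:R) * gg j * phi j%:R =
  \sum_(c <= j < k.+1) aa j * phi (j%:R - 1) - aa c * phi (c%:R - 1).
Proof.
move=> hck.
rewrite big_nat_recr //= subrr mulr0 mul0r mul0r addr0.
rewrite [in RHS]big_ltn ?ltnS // (big_add1 _ _ _ _ xpredT) /= [X in _ = X - _]addrC addrK.
apply: eq_big_nat => j /andP[_ hj].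
by rewrite step // -natr1 addrK.
Qed.


Hypothesis n0 : (0 < n)%N.
Definition mu : R := i%:R * k%:R / n%:R.
Definition ns : R := mu * (n%:R - i%:R) * (n%:R - k%:R) / n%:R.

Lemma nR0 : n%:R != 0 :> R.
Proof. by rewrite pnatr_eq0 -lt0n. Qed.

Lemma E1 c : (c <= k)%N ->
  n%:R * \sum_(c <= j < k.+1) gg j * (j%:R - mu) = aa c.
Proof.
move=> hck.
have H := shift c (fun _ => 1) hck.
have -> : aa c = \sum_(c <= j < k.+1) aa j * 1 -
   \sum_(c <= j < k.+1) (i%:R - j%:R) * (k%:R - j%:R) * gg j * 1.
  by rewrite H opprB addrC subrK mulr1.
rewrite -sumrB mulr_sumr; apply: eq_bigr => j _.
rewrite /aa /mu; field; exact: nR0.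
Qed.

Lemma E2 c : (c <= k)%N ->
  \sum_(c <= j < k.+1) gg j * ((n%:R - 1) * (j%:R - mu) ^+ 2
     - (2 * mu + n%:R - i%:R - k%:R) * (j%:R - mu) - ns)
  = aa c * (c%:R - 1 - mu).
Proof.
move=> hck.
have H := shift c (fun x => x - mu) hck.
have -> : aa c * (c%:R - 1 - mu) = \sum_(c <= j < k.+1) aa j * (j%:R - 1 - mu) -
   \sum_(c <= j < k.+1) (i%:R - j%:R) * (k%:R - j%:R) * gg j * (j%:R - mu).
  by rewrite H /= opprB addrCA subrr addr0.
rewrite -sumrB; apply: eq_bigr => j _.
rewrite /aa /ns /mu; field; exact: nR0.
Qed.

End H.
Lemma final (R : realType) (n i k c mu ns S0 S1 S2 V : R) :
  2 <= n -> 0 < S0 -> S1 ^+ 2 <= S0 * S2 ->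
  (n - 1) * S2 - (2 * mu + n - i - k) * S1 - ns * S0 = n * S1 * (c - 1 - mu) ->
  mu <= c -> c - 1 <= mu -> 2 * mu <= i + k -> ns / (n - 1) <= V ->
  (S1 + mu * S0) / S0 <= c + Num.sqrt (V + 1).
Proof.
move=> n2 S0p CS E2 h1 h2 h3 hV.
have S0n : S0 != 0 by rewrite gt_eqF.
set d := S1 / S0.
have -> : (S1 + mu * S0) / S0 = mu + d by rewrite /d; field.
have hS1 : S1 = d * S0 by rewrite /d divfK.
case: (lerP d (c - mu)) => hd.
  have := sqrtr_ge0 (V + 1); lra.
have d0 : 0 <= d by lra.
set E := S2 / S0.
have hS2 : S2 = E * S0 by rewrite /E divfK.
have CS' : d ^+ 2 <= E.
  have e1 : S1 ^+ 2 = S0 * (S0 * d ^+ 2) by rewrite hS1; ring.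
  have e2 : S0 * S2 = S0 * (S0 * E) by rewrite hS2; ring.
  by move: CS; rewrite e1 e2 !ler_pM2l.
have E2' : (n - 1) * E - (2 * mu + n - i - k) * d - ns = n * d * (c - 1 - mu).
  apply: (mulIf S0n).
  rewrite hS1 hS2 in E2.
  have -> : n * d * (c - 1 - mu) * S0 = n * (d * S0) * (c - 1 - mu) by ring.
  rewrite -E2; ring.
set t := d - (c - mu).
have key : (n - 1) * t ^+ 2 <= ns + (n - 1).
  have p1 : d * (2 * mu - i - k - (n - 2) * (c - mu)) <= 0.
    apply: mulr_ge0_le0 => //.
    have q : 0 <= (n - 2) * (c - mu) by apply: mulr_ge0; lra.
    lra.
  have p2 : (n - 1) * (c - mu) ^+ 2 <= n - 1.
    have q : (c - mu) ^+ 2 <= 1 by rewrite expr_le1 //; lra.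
    by rewrite -[X in _ <= X]mulr1; apply: ler_wpM2l => //; lra.
  have p3 : (n - 1) * d ^+ 2 <= (n - 1) * E by rewrite ler_pM2l; lra.
  rewrite /t; nra.
have key2 : t ^+ 2 <= V + 1.
  have n1 : 0 < n - 1 by lra.
  have : t ^+ 2 <= ns / (n - 1) + 1.
    have e : ns = (ns / (n - 1)) * (n - 1) by rewrite divfK // gt_eqF.
    move: key; rewrite {1}e; set w := ns / (n - 1) => key.
    rewrite -(ler_pM2l n1); lra.
  lra.
have : t <= Num.sqrt (V + 1).
  apply: le_trans (ler_norm t) _.
  rewrite -sqrtr_sqr; exact: ler_wsqrtr.
rewrite /t; lra.
Qed.

Lemma lin3 (R : realType) (r : seq nat) (F : nat -> R) (m a b z : R) :
  \sum_(j <- r) F j * (a * (j%:R - m) ^+ 2 - b * (j%:R - m) - z) =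
  a * \sum_(j <- r) F j * (j%:R - m) ^+ 2 - b * \sum_(j <- r) F j * (j%:R - m)
  - z * \sum_(j <- r) F j.
Proof. rewrite !mulr_sumr -!sumrB; apply: eq_bigr => j _; ring. Qed.

Theorem theorem5 (R : realType) (n i k : nat) :
  (0 < n)%N -> (1 <= i <= n)%N -> (1 <= k)%N -> (k < n)%N ->
  hyp_cond_mean_upper (R := R) n i k <=
    (Num.ceil (hyp_mean (R := R) n i k))%:~R
    + Num.sqrt (hyp_var (R := R) n i k * ((n - 1)%:R / (n - k)%:R) + 1).
Proof.
move=> n0 /andP[i1 hin] k1 kn.
have n2 : (2 <= n)%N by apply: leq_ltn_trans kn.
set C : R := ('C(n, k))%:R.
have C0 : 0 < C by rewrite ltr0n bin_gt0 ltnW.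
have C0' : C != 0 by rewrite gt_eqF.
have pmfE j : hyp_pmf (R:=R) n i k j = gg R n i k j / C by [].
have V : \sum_(j < k.+1) gg R n i k j = C.
  by rewrite /gg -natr_sum binomial.Vandermonde subnKC.
have nR : (0 : R) < n%:R by rewrite ltr0n.
set m := mu R n i k.
have S1f : \sum_(j < k.+1) gg R n i k j * (j%:R - m) = 0.
  have H := @E1 R n i k hin n0 0 (leq0n k).
  rewrite /aa !mul0r big_mkord in H.
  by move/eqP: H; rewrite mulf_eq0 (gt_eqF nR) /= => /eqP.
have Hm : hyp_mean (R:=R) n i k = m.
  rewrite /hyp_mean.
  have -> : \sum_(j < k.+1) j%:R * hyp_pmf n i k j =
     (\sum_(j < k.+1) (gg R n i k j * (j%:R - m) + m * gg R n i k j)) / C.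
    rewrite mulr_suml; apply: eq_bigr => j _; rewrite pmfE; by field.
  by rewrite big_split /= -mulr_sumr S1f V add0r mulfK.
set g := gg R n i k.
have g0 j : 0 <= g j by rewrite /g /gg ler0n.
set w := ns R n i k / (n%:R - 1).
have n1 : (0 : R) < n%:R - 1.
  have : (2 : R) <= n%:R by rewrite (ler_nat R 2 n).
  lra.
have Hv : hyp_var (R:=R) n i k = w.
  have H := @E2 R n i k hin n0 0 (leq0n k).
  rewrite /aa !mul0r lin3 !big_mkord -/g -/m in H.
  rewrite -/g S1f V mulr0 subr0 in H.
  rewrite /hyp_var Hm.
  have -> : \sum_(j < k.+1) (j%:R - m) ^+ 2 * hyp_pmf n i k j =
      (\sum_(j < k.+1) g j * (j%:R - m) ^+ 2) / C.
    rewrite mulr_suml; apply: eq_bigr => j _; rewrite pmfE; by field.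
  move/eqP: H; rewrite subr_eq0 => /eqP H.
  rewrite /w -[ns R n i k](mulfK C0') -H; field.
  by rewrite gt_eqF.
have w0 : 0 <= w.
  rewrite -Hv /hyp_var; apply: sumr_ge0 => j _; apply: mulr_ge0; first exact: sqr_ge0.
  by rewrite pmfE; apply: divr_ge0 => //; apply: ltW.
have mu0 : 0 <= m by rewrite /m /mu; apply: divr_ge0 => //; apply: mulr_ge0.
have muk : m <= k%:R.
  rewrite /m /mu ler_pdivrMr // mulrC ler_wpM2l //; by rewrite ler_nat.
rewrite Hm.
case Hc: (Num.ceil m) => [c|c]; last first.
  have h : (0 <= Num.ceil m)%R by rewrite ceil_ge0; lra.
  by rewrite Hc in h.
have hceil (j : nat) : (m <= j%:R) = (c <= j)%N.
  by rewrite pmulrn -ceil_le_int Hc lez_nat.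
have hcmu : m <= c%:R by have := ceil_ge m; rewrite Hc -pmulrn.
have hc1 : c%:R - 1 <= m.
  by have := ceilB1_lt m; rewrite Hc intrB -pmulrn => /ltW.
have hck : (c <= k)%N by rewrite -hceil.
have hsum (F : nat -> R) :
    \sum_(j < k.+1 | m <= j%:R) F j = \sum_(c <= j < k.+1) F j.
  by rewrite big_geq_mkord; apply: eq_bigl => j /=; rewrite hceil.
rewrite -pmulrn /hyp_cond_mean_upper Hm (hsum (fun j => j%:R * hyp_pmf n i k j)) (hsum (fun j => hyp_pmf n i k j)).

set S0 := \sum_(c <= j < k.+1) g j.
set S1 := \sum_(c <= j < k.+1) g j * (j%:R - m).
set S2 := \sum_(c <= j < k.+1) g j * (j%:R - m) ^+ 2.
have -> : \sum_(c <= j < k.+1) j%:R * hyp_pmf n i k j = (S1 + m * S0) / C.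
  rewrite /S1 /S0 mulr_sumr -big_split /= mulr_suml.
  apply: eq_bigr => j _; rewrite pmfE; by field.
have -> : \sum_(c <= j < k.+1) hyp_pmf (R:=R) n i k j = S0 / C.
  by rewrite mulr_suml.
have S0ge : 0 <= S0 by apply: sumr_ge0.
have sq0 : 0 <= Num.sqrt (hyp_var (R:=R) n i k * ((n - 1)%:R / (n - k)%:R) + 1).
  exact: sqrtr_ge0.
have c0 : (0 : R) <= c%:R by [].
case: (eqVneq S0 0) => [->|S0n].
  by rewrite mul0r invr0 mulr0; apply: addr_ge0.
have S0p : 0 < S0 by rewrite lt_def S0n.
have -> : (S1 + m * S0) / C / (S0 / C) = (S1 + m * S0) / S0.
  by field; rewrite S0n C0'.
have CS : S1 ^+ 2 <= S0 * S2.
  set d := S1 / S0.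
  have h : 0 <= 1 * S2 - (2 * d) * S1 - (- d ^+ 2) * S0.
    rewrite /S2 /S1 /S0 -lin3; apply: sumr_ge0 => j _.
    have -> : g j * (1 * (j%:R - m) ^+ 2 - 2 * d * (j%:R - m) - - d ^+ 2) =
      g j * (j%:R - m - d) ^+ 2 by ring.
    by apply: mulr_ge0 => //; apply: sqr_ge0.
  have h2 : 0 <= S0 * (1 * S2 - (2 * d) * S1 - (- d ^+ 2) * S0) by apply: mulr_ge0 => //; apply: ltW.
  have e : S0 * (1 * S2 - (2 * d) * S1 - (- d ^+ 2) * S0) = S0 * S2 - S1 ^+ 2.
    by rewrite /d; field.
  rewrite e in h2.
  lra.
have E2f : (n%:R - 1) * S2 - (2 * m + n%:R - i%:R - k%:R) * S1 - ns R n i k * S0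
    = n%:R * S1 * (c%:R - 1 - m).
  have H := @E2 R n i k hin n0 c hck.
  rewrite lin3 -/g -/m -/S0 -/S1 -/S2 in H.
  by rewrite H -(@E1 R n i k hin n0 c hck).
have h2m : 2 * m <= i%:R + k%:R.
  rewrite /m /mu mulrA ler_pdivrMr //.
  have a1 : i%:R * k%:R <= i%:R * n%:R :> R by apply: ler_wpM2l => //; rewrite ler_nat ltnW.
  have a2 : i%:R * k%:R <= k%:R * n%:R :> R by rewrite mulrC; apply: ler_wpM2l => //; rewrite ler_nat.
  lra.
have hV : ns R n i k / (n%:R - 1) <= hyp_var (R:=R) n i k * ((n - 1)%:R / (n - k)%:R).
  rewrite Hv -/w; apply: ler_peMr => //.
  have nk : (0 : R) < (n - k)%:R by rewrite ltr0n subn_gt0.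
  rewrite ler_pdivlMr // mul1r ler_nat.
  by apply: leq_sub2l.
apply: (@final R n%:R i%:R k%:R c%:R m (ns R n i k) S0 S1 S2) => //.
by rewrite (ler_nat R 2 n).
Qed.
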